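(* Let $A$ be an associative unital algebra and $(H,\pi,\psi)$ a left twisting datum for $A$. Let $A^H=\{a\in A: h\cdot a=\varepsilon(h)a\ \forall h\in H\}$ and $A^{co(H)}=\{a\in A: a_{(-1)}\otimes a_{(0)}=1\otimes a\}$. Then $A^H$ is a subalgebra which is a left $H$-comodule algebra (by restricting $\psi$) and $A^{co(H)}$ is a subalgebra which is a left $H$-module algebra (by restricting $\pi$). If moreover $ab=ba$ for all $a\in A^{co(H)}$ and $b\in A^H$, then the map $A^{co(H)}\blacktriangleright\!\!<A^H\to(A,\star)$, $a\blacktriangleright\!\!<b\mapsto ab$, is an algebra map.
   Context: Work over a field $k$; $H$ a bialgebra, $\Delta(h)=h_1\otimes h_2$. A left twisting datum $(H,\pi,\psi)$ for $A$: $A$ is a left $H$-module algebra ($\pi(h\otimes a)=h\cdot a$, $h\cdot(ab)=(h_1\cdot a)(h_2\cdot b)$, $h\cdot1=\varepsilon(h)1$) and a left $H$-comodule algebra ($\psi(a)=a_{(-1)}\otimes a_{(0)}$ an algebra map) with $(h\cdot a)_{(-1)}\otimes(h\cdot a)_{(0)}=a_{(-1)}\otimes h\cdot a_{(0)}$; the left twisted product is $a\star b=a_{(0)}(a_{(-1)}\cdot b)$. For a left $H$-module algebra $M$ and left $H$-comodule algebra $N$ (coaction $n\mapsto n_{(-1)}\otimes n_{(0)}$), the generalized smash product $M\blacktriangleright\!\!<N$ is $M\otimes N$ with product $(m\blacktriangleright\!\!<n)(m'\blacktriangleright\!\!<n')=m(n_{(-1)}\cdot m')\blacktriangleright\!\!<n_{(0)}n'$.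 *)

(* Defs.v *)
(* Tensor products over the field k are not in the library;
   an element of U (x) V is represented by a finite list of pairs (a formal sum
   of pure tensors), and equality in U (x) V is the relation [teq], defined by
   the universal property: two formal sums are equal in U (x) V iff every
   k-bilinear map U x V -> W (W any k-vector space) takes the same value on
   them.  Sweedler notation
   Delta(h) = h_1 (x) h_2  is  "\sum_(p <- D h) ... p.1 ... p.2 ...". *)
From HB Require Import structures.
From mathcomp Require Import all_boot all_order all_algebra.
Set Implicit Arguments. Unset Strict Implicit. Unset Printing Implicit Defensive.
Import GRing.Theory.
Local Open Scope ring_scope.

Section TensorDefs.
Variable k : fieldType.

Definition bilin2 (U V W : lmodType k) (f : U -> V -> W) : Prop :=
  (forall v (c : k) x y, f (c *: x + y) v = c *: f x v + f y v) /\
  (forall u (c : k) x y, f u (c *: x + y) = c *: f u x + f u y).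

Definition bilin3 (U V X W : lmodType k) (f : U -> V -> X -> W) : Prop :=
  (forall v z (c : k) x y, f (c *: x + y) v z = c *: f x v z + f y v z) /\
  (forall u z (c : k) x y, f u (c *: x + y) z = c *: f u x z + f u y z) /\
  (forall u v (c : k) x y, f u v (c *: x + y) = c *: f u v x + f u v y).

Definition teq (U V : lmodType k) (s t : seq (U * V)) : Prop :=
  forall (W : lmodType k) (f : U -> V -> W), bilin2 f ->
    \sum_(p <- s) f p.1 p.2 = \sum_(p <- t) f p.1 p.2.

Definition teq3 (U V X : lmodType k) (s t : seq (U * V * X)) : Prop :=
  forall (W : lmodType k) (f : U -> V -> X -> W), bilin3 f ->
    \sum_(p <- s) f p.1.1 p.1.2 p.2 = \sum_(p <- t) f p.1.1 p.1.2 p.2.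

Definition tscale (U V : lmodType k) (c : k) (s : seq (U * V)) : seq (U * V) :=
  [seq (c *: p.1, p.2) | p <- s].

Definition tmul (R S : algType k) (s t : seq (R * S)) : seq (R * S) :=
  [seq (p.1 * q.1, p.2 * q.2) | p <- s, q <- t].

Definition subalg (A : algType k) (S : A -> Prop) : Prop :=
  [/\ S 1,
      (forall (c : k) x y, S x -> S y -> S (c *: x + y)) &
      (forall x y, S x -> S y -> S (x * y))].

Definition is_bialgebra (H : algType k) (D : H -> seq (H * H)) (e : H -> k)
  : Prop :=
  [/\ (forall (c : k) x y, teq (D (c *: x + y)) (tscale c (D x) ++ D y)),
      (forall (c : k) x y, e (c *: x + y) = c * e x + e y),
      (forall h, teq3 [seq (q.1, q.2, p.2) | p <- D h, q <- D p.1]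
                      [seq (p.1, q.1, q.2) | p <- D h, q <- D p.2]),
      (forall h, \sum_(p <- D h) e p.1 *: p.2 = h /\
                 \sum_(p <- D h) e p.2 *: p.1 = h) &
      [/\ (forall x y, teq (D (x * y)) (tmul (D x) (D y))),
          teq (D 1) [:: (1, 1)],
          (forall x y, e (x * y) = e x * e y) &
          e 1 = 1]].

Definition module_algebra_on (H A : algType k) (D : H -> seq (H * H))
  (e : H -> k) (S : A -> Prop) (pi : H -> A -> A) : Prop :=
  [/\ subalg S,
      (forall h a, S a -> S (pi h a)),
      (forall h (c : k) x y, S x -> S y ->
          pi h (c *: x + y) = c *: pi h x + pi h y),
      (forall (c : k) g h x, S x -> pi (c *: g + h) x = c *: pi g x + pi h x) &
      [/\ (forall x, S x -> pi 1 x = x),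
          (forall g h x, S x -> pi (g * h) x = pi g (pi h x)),
          (forall h x y, S x -> S y ->
              pi h (x * y) = \sum_(p <- D h) pi p.1 x * pi p.2 y) &
          (forall h, pi h 1 = e h *: 1)]].

Definition comodule_algebra_on (H A : algType k) (D : H -> seq (H * H))
  (e : H -> k) (S : A -> Prop) (psi : A -> seq (H * A)) : Prop :=
  [/\ subalg S,
      (forall a, S a -> exists t : seq (H * A),
          teq (psi a) t /\ (forall p, p \in t -> S p.2)),
      (forall (c : k) x y, S x -> S y ->
          teq (psi (c *: x + y)) (tscale c (psi x) ++ psi y)),
      (forall a, S a ->
          teq3 [seq (q.1, q.2, p.2) | p <- psi a, q <- D p.1]
               [seq (p.1, q.1, q.2) | p <- psi a, q <- psi p.2]) &
      [/\ (forall a, S a -> \sum_(p <- psi a) e p.1 *: p.2 = a),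
          (forall x y, S x -> S y -> teq (psi (x * y)) (tmul (psi x) (psi y))) &
          teq (psi 1) [:: (1, 1)]]].

Definition left_twisting_datum (H A : algType k) (D : H -> seq (H * H))
  (e : H -> k) (pi : H -> A -> A) (psi : A -> seq (H * A)) : Prop :=
  [/\ is_bialgebra D e,
      module_algebra_on D e (fun _ => True) pi,
      comodule_algebra_on D e (fun _ => True) psi &
      (forall h a, teq (psi (pi h a)) [seq (p.1, pi h p.2) | p <- psi a])].

Definition invariants (H A : algType k) (e : H -> k) (pi : H -> A -> A)
  (a : A) : Prop := forall h, pi h a = e h *: a.

Definition coinvariants (H A : algType k) (psi : A -> seq (H * A))
  (a : A) : Prop := teq (psi a) [:: (1, a)].

(* left twisted product a * b = a_(0) (a_(-1) . b) *)
Definition twisted_mul (H A : algType k) (pi : H -> A -> A)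
  (psi : A -> seq (H * A)) (a b : A) : A :=
  \sum_(q <- psi a) q.2 * pi q.1 b.

(* product of the generalized smash product M >< N, extended bilinearly:
   (m >< n)(m' >< n') = m (n_(-1) . m') >< n_(0) n' *)
Definition smash_mul (H A : algType k) (pi : H -> A -> A)
  (psi : A -> seq (H * A)) (x y : seq (A * A)) : seq (A * A) :=
  [seq (pq.1.1 * pi r.1 pq.2.1, r.2 * pq.2.2)
     | pq <- [seq (p, q) | p <- x, q <- y], r <- psi pq.1.2].

Definition mulmap (A : algType k) (t : seq (A * A)) : A :=
  \sum_(p <- t) p.1 * p.2.

End TensorDefs.

(* Main.v *)
Require Import Defs.
From HB Require Import structures.
From mathcomp Require Import all_boot all_order all_algebra.
From mathcomp Require Import boolp classical_sets.
Set Implicit Arguments. Unset Strict Implicit. Unset Printing Implicit Defensive.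
Import GRing.Theory.
Local Open Scope ring_scope.
Section Ext.
Local Open Scope classical_set_scope.
Variables (k : fieldType) (H : lmodType k) (V : H -> Prop).
Hypothesis V0 : V 0.
Hypothesis Vlin : forall c x y, V x -> V y -> V (c*:x+y).
Variable h : H.
Hypothesis nVh : ~ V h.

Definition valid (G : set (H * k)) :=
  (forall x a b, G (x,a) -> G (x,b) -> a = b) /\
  (forall c x y a b, G (x,a) -> G (y,b) -> G (c*:x+y, c*a+b)).

Definition G0 : set (H * k) := fun p => exists c s, V s /\ p = (c*:h+s, c).

Lemma scale_solve (c1 c2 : k) (x y1 y2 : H) :
  c1 != c2 -> y1 + c1 *: x = y2 + c2 *: x -> x = (c1 - c2)^-1 *: (y2 - y1).
Proof.
move=> ne E.
have E' : (c1 - c2) *: x = y2 - y1.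
  rewrite scalerBl.
  have -> : c1 *: x = y2 + c2 *: x - y1 by rewrite -E [y1 + _]addrC addrK.
  by rewrite [y2 + _ - _]addrAC addrK.
by rewrite -E' scalerA mulVf ?scale1r // subr_eq0.
Qed.

Lemma G0valid : valid G0.
Proof.
split.
  move=> x a b [c1 [s1 [Vs1 [-> ->]]]] [c2 [s2 [Vs2 [E ->]]]].
  case: (eqVneq c1 c2) => // ne; exfalso; apply: nVh.
  rewrite (@scale_solve c1 c2 h s1 s2) //; last by rewrite addrC E addrC.
  rewrite -[_ *: _]addr0; apply: Vlin => //.
  by rewrite addrC -scaleN1r; apply: Vlin.
move=> c x y a b [c1 [s1 [Vs1 [-> ->]]]] [c2 [s2 [Vs2 [-> ->]]]].
exists (c * c1 + c2), (c *: s1 + s2); split; first exact: Vlin.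
congr (_, _); rewrite scalerDr scalerDl scalerA -!addrA; congr (_ + _).
by rewrite addrCA.
Qed.

Lemma ext_functional : exists phi : H -> k,
  [/\ forall c x y, phi (c *: x + y) = c * phi x + phi y,
      phi h = 1 & forall s, V s -> phi s = 0].
Proof.
pose P (X : set (H * k)) := valid (X `|` G0).
have common : forall F, F `<=` P -> total_on F subset ->
    forall u v, (\bigcup_(X in F) X `|` G0) u -> (\bigcup_(X in F) X `|` G0) v ->
    exists Z, [/\ valid Z, Z u, Z v & Z `<=` (\bigcup_(X in F) X `|` G0)].
  move=> F FP tot u v [[X1 FX1 X1u]|G0u] [[X2 FX2 X2v]|G0v].
  - have [s12|s21] := tot _ _ FX1 FX2.
      exists (X2 `|` G0); split; [exact: FP|left; exact: s12|by left|].
      by move=> p [Xp|Gp]; [left; exists X2|right].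
    exists (X1 `|` G0); split; [exact: FP|by left|left; exact: s21|].
    by move=> p [Xp|Gp]; [left; exists X1|right].
  - exists (X1 `|` G0); split; [exact: FP|by left|by right|].
    by move=> p [Xp|Gp]; [left; exists X1|right].
  - exists (X2 `|` G0); split; [exact: FP|by right|by left|].
    by move=> p [Xp|Gp]; [left; exists X2|right].
  - exists G0; split; [exact: G0valid|by []|by []|by move=> p Gp; right].
have [A [PA maxA]] : exists A, P A /\ forall B, A `<` B -> ~ P B.
  apply: Zorn_bigcup => F FP tot; split.
    move=> x a b u v; have [Z [vZ Zu Zv _]] := common F FP tot _ _ u v.
    exact: (vZ.1 x).
  move=> c x y a b u v; have [Z [vZ Zu Zv ZU]] := common F FP tot _ _ u v.
  by apply: ZU; apply: vZ.2.
set G := A `|` G0.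
have [Gfun Glin] : valid G := PA.
have G00 : G (0, 0).
  by right; exists 0, 0; split => //; rewrite scale0r addr0.
have Gdom : forall x, exists a, G (x, a).
  move=> x; apply: contrapT => nx.
  pose G' : set (H * k) := fun p => exists y a c, G (y, a) /\ p = (y + c *: x, a).
  have GG' : G `<=` G'.
    by case=> y a Gya; exists y, a, 0; rewrite scale0r addr0.
  have vG' : valid G'.
    split.
      move=> z a b [y1 [a1 [c1 [G1 [-> ->]]]]] [y2 [a2 [c2 [G2 [E ->]]]]].
      case: (eqVneq c1 c2) => [eqc|ne].
        by move: E; rewrite eqc => /addIr Ey; apply: (Gfun y1); rewrite // Ey.
      exfalso; apply: nx; exists ((c1 - c2)^-1 * (-1 * a1 + a2) + 0).
      rewrite (scale_solve ne E) -[_ *: (y2 - y1)]addr0; apply: (Glin) => //.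
      by rewrite addrC -scaleN1r; apply: (Glin).
    move=> c z w a b [y1 [a1 [c1 [G1 [-> ->]]]]] [y2 [a2 [c2 [G2 [-> ->]]]]].
    exists (c *: y1 + y2), (c * a1 + a2), (c * c1 + c2); split; first exact: (Glin).
    congr (_, _); rewrite scalerDr scalerDl scalerA -!addrA; congr (_ + _).
    by rewrite addrCA.
  have AG' : A `<` G'.
    split; first by move=> p Ap; apply: GG'; left.
    move=> /(_ (x, 0)) H0; apply: nx; exists 0; left; apply: H0.
    by exists 0, 0, 1; split => //; rewrite scale1r add0r.
  apply: (maxA _ AG'); rewrite /P.
  have -> : G' `|` G0 = G' by apply/setUidPl => p Gp; apply: GG'; right.
  exact: vG'.
have [phi Hphi] := choice Gdom.
exists phi; split.
- move=> c x y; apply: (Gfun (c *: x + y)); first exact: Hphi.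
  by apply: (Glin); apply: Hphi.
- apply: (Gfun h); first exact: Hphi.
  by right; exists 1, 0; split => //; rewrite scale1r addr0.
- move=> s Vs; apply: (Gfun s); first exact: Hphi.
  by right; exists 0, s; split => //; rewrite scale0r add0r.
Qed.

End Ext.

Section Bil.
Variables (k : fieldType) (U V W : lmodType k) (f : U -> V -> W).
Hypothesis bf : bilin2 f.

Lemma xxx_eq0 (x : W) : x = x + x -> x = 0.
Proof. by rewrite -{1}[x]addr0 => /addrI. Qed.

Lemma bil0l v : f 0 v = 0.
Proof. by apply: xxx_eq0; have := bf.1 v 1 0 0; rewrite scale1r addr0 scale1r. Qed.
Lemma bil0r u : f u 0 = 0.
Proof. by apply: xxx_eq0; have := bf.2 u 1 0 0; rewrite scale1r addr0 scale1r. Qed.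
Lemma bilZl c x v : f (c *: x) v = c *: f x v.
Proof. by have := bf.1 v c x 0; rewrite !addr0 bil0l addr0. Qed.
Lemma bilZr c u x : f u (c *: x) = c *: f u x.
Proof. by have := bf.2 u c x 0; rewrite !addr0 bil0r addr0. Qed.
Lemma bilDl x y v : f (x + y) v = f x v + f y v.
Proof. by have := bf.1 v 1 x y; rewrite !scale1r. Qed.
Lemma bilDr u x y : f u (x + y) = f u x + f u y.
Proof. by have := bf.2 u 1 x y; rewrite !scale1r. Qed.
Lemma bilNl x v : f (- x) v = - f x v.
Proof. by rewrite -scaleN1r bilZl scaleN1r. Qed.
Lemma bilNr u x : f u (- x) = - f u x.
Proof. by rewrite -scaleN1r bilZr scaleN1r. Qed.
Lemma bilBl x y v : f (x - y) v = f x v - f y v.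
Proof. by rewrite bilDl bilNl. Qed.
Lemma bilBr u x y : f u (x - y) = f u x - f u y.
Proof. by rewrite bilDr bilNr. Qed.
Lemma bil_suml (I : Type) (s : seq I) (G : I -> U) v :
  f (\sum_(i <- s) G i) v = \sum_(i <- s) f (G i) v.
Proof.
elim: s => [|i s IH]; first by rewrite !big_nil bil0l.
by rewrite !big_cons bilDl IH.
Qed.
Lemma bil_sumr (I : Type) (s : seq I) (G : I -> V) u :
  f u (\sum_(i <- s) G i) = \sum_(i <- s) f u (G i).
Proof.
elim: s => [|i s IH]; first by rewrite !big_nil bil0r.
by rewrite !big_cons bilDr IH.
Qed.
End Bil.

Section Key.
Variables (k : fieldType) (H A : lmodType k).

Fixpoint in_span (l : seq H) (x : H) : Prop :=
  match l with
  | [::] => x = 0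
  | y :: l' => exists c, in_span l' (x - c *: y)
  end.

Lemma span0 l : in_span l 0.
Proof. by elim: l => [|y l IH] //=; exists 0; rewrite scale0r subr0. Qed.

Lemma spanlin l c x y : in_span l x -> in_span l y -> in_span l (c *: x + y).
Proof.
elim: l x y => [|z l IH] x y /=; first by move=> -> ->; rewrite scaler0 addr0.
move=> [c1 H1] [c2 H2]; exists (c * c1 + c2).
have := IH _ _ H1 H2; congr in_span.
by rewrite scalerBr scalerDl scalerA opprD addrACA.
Qed.

Lemma span_mem l x : x \in l -> in_span l x.
Proof.
elim: l => [|y l IH] //=; rewrite in_cons => /orP[/eqP ->|xl].
  by exists 1; rewrite scale1r subrr; apply: span0.
by exists 0; rewrite scale0r subr0; apply: IH.
Qed.

Lemma reduce (s : seq (H * A)) h a : in_span (map fst s) h ->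
  exists s2, size s2 = size s /\ teq ((h, a) :: s) s2.
Proof.
elim: s h => [|[y b] s IH] h /=.
  by move=> ->; exists [::]; split => // W f bf; rewrite big_cons !big_nil /= bil0l // addr0.
move=> [c Hc]; have [s0 [sz E]] := IH _ Hc.
exists ((y, b + c *: a) :: s0); split; first by rewrite /= sz.
move=> W f bf; rewrite !big_cons /= -(E W f bf) big_cons /=.
rewrite (bilBl bf) (bilZl bf) (bilDr bf) (bilZr bf).
set X := f h a; set Y := f y b; set Z := c *: f y a; set S := \sum_(_ <- _) _.
by rewrite -addrA (addrA Z) [Z + _]addrC subrK addrCA.
Qed.

Lemma key (I : Type) (T : I -> A -> A)
  (Tlin : forall i c x y, T i (c *: x + y) = c *: T i x + T i y)
  (s : seq (H * A)) :
  (forall i (W : lmodType k) (f : H -> A -> W), bilin2 f ->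
      \sum_(p <- s) f p.1 (T i p.2) = 0) ->
  exists t, teq s t /\ forall p, p \in t -> forall i, T i p.2 = 0.
Proof.
have [n sn] := ubnP (size s); elim: n s sn => // n IH [|[h a] s'] /= sn Hyp.
  by exists [::]; split.
have Tbil : forall (i : I) (W : lmodType k) (f : H -> A -> W), bilin2 f -> bilin2 (fun u v => f u (T i v)).
  move=> i W f bf; split=> *; first by rewrite (bf.1).
  by rewrite Tlin (bf.2).
case: (pselect (in_span (map fst s') h)) => [sp|nsp].
  have [s2 [sz E]] := reduce a sp.
  have sz2 : (size s2 < n)%N by rewrite sz.
  have [t [Et Tt]] := IH s2 sz2 (fun i W f bf => etrans (esym (E _ _ (Tbil i W f bf))) (Hyp i W f bf)).
  by exists t; split => // W f bf; rewrite (E W f bf) (Et W f bf).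
have [phi [philin phih phis]] := ext_functional (@span0 _) (@spanlin _) nsp.
have bphi : bilin2 (fun (u : H) (b : A) => phi u *: b).
  split=> *; first by rewrite philin scalerDl scalerA.
  by rewrite scalerDr !scalerA mulrC.
have Ta : forall i, T i a = 0.
  move=> i; have := Hyp i A _ bphi; rewrite big_cons /= phih scale1r.
  rewrite big_seq big1 ?addr0 // => p ps.
  by rewrite phis ?scale0r //; apply: span_mem; apply: map_f.
have Hyp' : forall (i : I) (W : lmodType k) (f : H -> A -> W), bilin2 f ->
    \sum_(p <- s') f p.1 (T i p.2) = 0.
  by move=> i W f bf; have := Hyp i W f bf; rewrite big_cons /= Ta (bil0r bf) add0r.
have [t [Et Tt]] := IH s' sn Hyp'.
exists ((h, a) :: t); split.
  by move=> W f bf; rewrite !big_cons (Et W f bf).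
move=> p; rewrite in_cons => /orP[/eqP -> //|]; exact: Tt.
Qed.
End Key.

Lemma addxx0 (V : zmodType) (x : V) : x = x + x -> x = 0.
Proof. by rewrite -{1}[x]addr0 => /addrI. Qed.

Theorem proposition4p9 (k : fieldType) (H A : algType k)
  (D : H -> seq (H * H)) (e : H -> k)
  (pi : H -> A -> A) (psi : A -> seq (H * A)) :
  left_twisting_datum D e pi psi ->
  comodule_algebra_on D e (invariants e pi) psi /\
  module_algebra_on D e (coinvariants psi) pi /\
  ((forall a b, coinvariants psi a -> invariants e pi b -> a * b = b * a) ->
    mulmap [:: ((1 : A), (1 : A))] = 1 /\
    (forall x y : seq (A * A),
       (forall p, p \in x -> coinvariants psi p.1 /\ invariants e pi p.2) ->
       (forall p, p \in y -> coinvariants psi p.1 /\ invariants e pi p.2) ->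
       mulmap (smash_mul pi psi x y)
       = twisted_mul pi psi (mulmap x) (mulmap y))).
Proof.
move=> [[Dlin elin Dcoass cu [Dmul D1 emul e1]]
        [_ _ pilinA pilinH [pi1 pimul pimulA pih1]]
        [_ _ psilin psicoass [psicu psimul psi1]] compat].
have e0 : e 0 = 0.
  by apply: addxx0; have := elin 1 0 0; rewrite scale1r addr0 mul1r.
have e_sum : forall (J : Type) (s : seq J) (c : J -> k) (z : J -> H),
    e (\sum_(i <- s) c i *: z i) = \sum_(i <- s) c i * e (z i).
  move=> J s c z; elim: s => [|i s IH]; first by rewrite !big_nil.
  by rewrite !big_cons elin IH.
have pi0 : forall x, pi 0 x = 0.
  by move=> x; apply: addxx0; have := pilinH 1 0 0 x I; rewrite scale1r addr0 scale1r.
have pi_sumH : forall (J : Type) (s : seq J) (c : J -> k) (z : J -> H) x,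
    pi (\sum_(i <- s) c i *: z i) x = \sum_(i <- s) c i *: pi (z i) x.
  move=> J s c z x; elim: s => [|i s IH]; first by rewrite !big_nil.
  by rewrite !big_cons pilinH // IH.
have piA0 : forall g, pi g 0 = 0.
  by move=> g; apply: addxx0; have := pilinA g 1 0 0 I I; rewrite scale1r addr0 scale1r.
have pi_sumA : forall (J : Type) (s : seq J) (z : J -> A) g,
    pi g (\sum_(i <- s) z i) = \sum_(i <- s) pi g (z i).
  move=> J s z g; elim: s => [|i s IH]; first by rewrite !big_nil.
  by rewrite !big_cons -IH; have := pilinA g 1 (z i) (\sum_(j <- s) z j) I I; rewrite !scale1r.
have tscale_sum : forall (W : lmodType k) (f : H -> A -> W), bilin2 f ->
    forall c (s : seq (H * A)),
    \sum_(p <- tscale c s) f p.1 p.2 = c *: \sum_(p <- s) f p.1 p.2.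
  move=> W f bf c s; rewrite big_map scaler_sumr; apply: eq_bigr => p _.
  exact: (bilZl bf).
have psi0 : forall (W : lmodType k) (f : H -> A -> W), bilin2 f ->
    \sum_(p <- psi 0) f p.1 p.2 = 0.
  move=> W f bf; apply: addxx0.
  have := psilin 1 0 0 I I W f bf; rewrite scale1r addr0 big_cat /= tscale_sum //.
  by rewrite scale1r.
have psiZ : forall (W : lmodType k) (f : H -> A -> W), bilin2 f ->
    forall c a, \sum_(p <- psi (c *: a)) f p.1 p.2 = c *: \sum_(p <- psi a) f p.1 p.2.
  move=> W f bf c a; have := psilin c a 0 I I W f bf.
  by move=> E; rewrite -[c *: a]addr0 E big_cat /= tscale_sum // psi0 // addr0.
have psi_sum : forall (W : lmodType k) (f : H -> A -> W), bilin2 f ->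
    forall (J : Type) (s : seq J) (z : J -> A),
    \sum_(p <- psi (\sum_(i <- s) z i)) f p.1 p.2
    = \sum_(i <- s) \sum_(p <- psi (z i)) f p.1 p.2.
  move=> W f bf J s z; elim: s => [|i s IH]; first by rewrite !big_nil psi0.
  rewrite !big_cons -IH; have := psilin 1 (z i) (\sum_(j <- s) z j) I I W f bf.
  by rewrite scale1r => ->; rewrite big_cat /= tscale_sum // scale1r.
have tmul_left : forall (s t : seq (H * A)) (x : A), teq s [:: (1, x)] ->
    forall (W : lmodType k) (f : H -> A -> W), bilin2 f ->
    \sum_(p <- tmul s t) f p.1 p.2 = \sum_(q <- t) f q.1 (x * q.2).
  move=> s t x Es W f bf; rewrite /tmul big_allpairs_dep /=.
  have bg : bilin2 (fun (u : H) (v : A) => \sum_(q <- t) f (u * q.1) (v * q.2)).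
    split=> *; rewrite scaler_sumr -big_split; apply: eq_bigr => q _ /=.
      by rewrite mulrDl -scalerAl (bf.1).
    by rewrite mulrDl -scalerAl (bf.2).
  rewrite (Es W _ bg) big_seq1 /=; apply: eq_bigr => q _; by rewrite mul1r.
have inv_split : forall a, invariants e pi a -> exists t : seq (H * A),
    teq (psi a) t /\ (forall p, p \in t -> invariants e pi p.2).
  move=> a Ia.
  have Tlin : forall (g : H) (c : k) (x y : A),
      pi g (c *: x + y) - e g *: (c *: x + y)
      = c *: (pi g x - e g *: x) + (pi g y - e g *: y).
    move=> g c x y; rewrite pilinA // scalerBr !scalerDr !scalerA (mulrC c).
    by rewrite opprD addrACA.
  have [|t [Et Tt]] := @key k H A H (fun g b => pi g b - e g *: b) Tlin (psi a).
    move=> g W f bf /=.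
    rewrite (eq_bigr (fun p => f p.1 (pi g p.2) - e g *: f p.1 p.2)); last first.
      by move=> p _; rewrite (bilBr bf) (bilZr bf).
    rewrite sumrB -scaler_sumr.
    have := compat g a W f bf; rewrite big_map /= => <-.
    by rewrite Ia psiZ // subrr.
  exists t; split => // p pt g; apply/eqP; rewrite -subr_eq0; apply/eqP.
  exact: Tt.
have coinv_pi : forall g a, coinvariants psi a -> coinvariants psi (pi g a).
  move=> g a Ca W f bf; rewrite (compat g a W f bf) big_map /=.
  have bg : bilin2 (fun (u : H) (v : A) => f u (pi g v)).
    by split=> *; [rewrite (bf.1)|rewrite pilinA // (bf.2)].
  by rewrite (Ca W _ bg) !big_seq1.
split.
  split.
  - split.
    + by move=> g; rewrite pih1.
    + by move=> c x y Ix Iy g; rewrite pilinA // Ix Iy scalerDr !scalerA mulrC.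
    + move=> x y Ix Iy g; rewrite pimulA //.
      rewrite (eq_bigr (fun p => (e p.1 * e p.2) *: (x * y))); last first.
        by move=> p _; rewrite Ix Iy -scalerAl -scalerAr scalerA.
      rewrite -scaler_suml; congr (_ *: _).
      by rewrite -[in RHS](cu g).1 e_sum.
  - exact: inv_split.
  - by move=> c x y _ _; apply: psilin.
  - by move=> a _; apply: psicoass.
  - split.
    + by move=> a _; apply: psicu.
    + by move=> x y _ _; apply: psimul.
    + exact: psi1.
split.
  split.
  - split.
    + exact: psi1.
    + move=> c x y Cx Cy W f bf; rewrite (psilin c x y I I W f bf) big_cat /=.
      by rewrite tscale_sum // (Cx W f bf) (Cy W f bf) !big_seq1 /= (bf.2).
    + move=> x y Cx Cy W f bf; rewrite (psimul x y I I W f bf) (tmul_left _ _ _ Cx) //.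
      have bg : bilin2 (fun (u : H) (v : A) => f u (x * v)).
        by split=> *; [rewrite (bf.1)|rewrite mulrDr -scalerAr (bf.2)].
      by rewrite (Cy W _ bg) !big_seq1.
  - exact: coinv_pi.
  - by move=> g c x y _ _; apply: pilinA.
  - by move=> c g g' x _; apply: pilinH.
  - split.
    + by move=> x _; apply: pi1.
    + by move=> g g' x _; apply: pimul.
    + by move=> g x y _ _; apply: pimulA.
    + exact: pih1.
move=> comm; split; first by rewrite /mulmap big_seq1 mulr1.
move=> x y Hx Hy.
rewrite /mulmap /smash_mul /twisted_mul big_allpairs_dep /= big_allpairs_dep /=.
set B := \sum_(q <- y) q.1 * q.2.
have bF : bilin2 (fun (u : H) (v : A) => v * pi u B).
  split=> *; first by rewrite pilinH // mulrDr -scalerAr.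
  by rewrite mulrDl -scalerAl.
rewrite (psi_sum _ _ bF _ x (fun p => p.1 * p.2)).
apply: eq_big_seq => p px /=.
have [Cp Ip] := Hx p px.
rewrite (psimul _ _ I I _ _ bF) (tmul_left _ _ _ Cp _ _ bF) /=.
have piq : forall g q, q \in y -> pi g (q.1 * q.2) = pi g q.1 * q.2.
  move=> g q qy; have [_ Iq] := Hy q qy; rewrite pimulA //.
  rewrite (eq_bigr (fun d => (e d.2 *: pi d.1 q.1) * q.2)); last first.
    by move=> d _; rewrite Iq -scalerAr -scalerAl.
  by rewrite -mulr_suml -(pi_sumH _ _ (fun d => e d.2) (fun d => d.1)) (cu g).2.
rewrite (eq_bigr (fun r => \sum_(q <- y) p.1 * r.2 * (pi r.1 q.1 * q.2))); last first.
  move=> r _; rewrite /B pi_sumA mulr_sumr; apply: eq_big_seq => q qy.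
  by rewrite piq.
rewrite [RHS]exchange_big /=.
have sAl : forall c (u v : A), c *: u * v = c *: (u * v) by move=> *; rewrite scalerAl.
have sAr : forall c (u v : A), u * (c *: v) = c *: (u * v) by move=> *; rewrite scalerAr.
apply: eq_big_seq => q qy.
have [Cq Iq] := Hy q qy.
have [t [Et It]] := inv_split p.2 Ip.
have bG1 : bilin2 (fun (u : H) (v : A) => p.1 * pi u q.1 * (v * q.2)).
  split=> *; first by rewrite pilinH // !(mulrDl, mulrDr, sAl, sAr).
  by rewrite !(mulrDl, mulrDr, sAl, sAr).
have bG2 : bilin2 (fun (u : H) (v : A) => p.1 * v * (pi u q.1 * q.2)).
  split=> *; first by rewrite pilinH // !(mulrDl, mulrDr, sAl, sAr).
  by rewrite !(mulrDl, mulrDr, sAl, sAr).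
rewrite (Et _ _ bG1) (Et _ _ bG2); apply: eq_big_seq => r rt /=.
have Ir := It r rt.
have Cr := coinv_pi r.1 q.1 Cq.
by rewrite !mulrA -(mulrA p.1) (comm _ _ Cr Ir) !mulrA.
Qed.
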